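(* Let $A$ be a hyperoperator on $\mathbb{R}^n$ on the complex Banach space $X$ and let $(\chi_N)$ be an exhausting sequence in $\mathbb{R}^n$. Then $\bigcup_N \operatorname{Im} A(\chi_N)=D_A$, where $D_A=\bigcup_{\phi\in\mathcal{D}(\mathbb{R}^n)}\operatorname{Im}A(\phi)$.
   Context: $X$ is a complex Banach space, $L(X)$ the bounded operators on $X$, $e_X$ the identity. $\mathcal{D}(\mathbb{R}^n)=C_c^\infty(\mathbb{R}^n)$ (complex-valued) with its usual topology. A linear map $A:\mathcal{D}(\mathbb{R}^n)\to L(X)$ is continuous if $A(\phi_j)\to 0$ in operator norm whenever $\phi_j\to0$ in $\mathcal{D}(\mathbb{R}^n)$, and multiplicative if $A(\phi\psi)=A(\phi)A(\psi)$. A hyperoperator on $\mathbb{R}^n$ is a continuous linear multiplicative map $A:\mathcal{D}(\mathbb{R}^n)\to L(X)$ such that (i) $D_A:=\bigcup_{\phi}\operatorname{Im}A(\phi)$ is dense in $X$ and (ii) $\bigcap_\phi\operatorname{Ker}A(\phi)=\{0\}$. A sequence $\chi_N\in\mathcal{D}(\mathbb{R}^n)$ is exhausting if $0\le\chi_N\le1$, $\chi_N\nearrow 1$, and the compact sets $K_N=\{\chi_N=1\}$ satisfy $K_N\subset\operatorname{int}K_{N+1}$ and $\bigcup_N K_N=\mathbb{R}^n$. *)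

(* Defs.v *)
From HB Require Import structures.
From mathcomp Require Import all_boot all_order all_algebra.
From mathcomp Require Import all_classical all_reals all_analysis.
From mathcomp Require Import complex.
Set Implicit Arguments. Unset Strict Implicit. Unset Printing Implicit Defensive.
Import Order.TTheory GRing.Theory Num.Theory.
Import numFieldNormedType.Exports.
Local Open Scope classical_set_scope.
Local Open Scope ring_scope.

(* R^n is modelled as the row vectors 'rV[R]_n; the scalar field of X is
   the complex numbers R[i] over the real field R.  Test functions are
   complex-valued functions on R^n. *)

Definition evec (R : realType) (n : nat) (i : 'I_n) : 'rV[R]_n := delta_mx 0 i.

Definition pderiv (R : realType) (n : nat) (i : 'I_n) (f : 'rV[R]_n -> R)
  : 'rV[R]_n -> R := fun x => derive f x (evec R i).

(* iterated partial derivative d_{s_1} ... d_{s_k} f for a multi-index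
   given as a list of directions *)
Definition iter_pderiv (R : realType) (n : nat) (s : seq 'I_n)
  (f : 'rV[R]_n -> R) : 'rV[R]_n -> R := foldr (@pderiv R n) f s.

Definition smooth (R : realType) (n : nat) (f : 'rV[R]_n -> R) : Prop :=
  (forall (s : seq 'I_n) (i : 'I_n) (x : 'rV[R]_n),
      derivable (iter_pderiv s f) x (evec R i)) /\
  (forall s : seq 'I_n, continuous (iter_pderiv s f)).

Definition support_fun (R : realType) (n : nat) (f : 'rV[R]_n -> R[i]) :=
  closure [set x | f x != 0].

Definition test_fun (R : realType) (n : nat) (f : 'rV[R]_n -> R[i]) : Prop :=
  smooth (fun x => complex.Re (f x)) /\ smooth (fun x => complex.Im (f x)) /\
  compact (support_fun f).

Definition iter_pderivC (R : realType) (n : nat) (s : seq 'I_n)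
  (f : 'rV[R]_n -> R[i]) : 'rV[R]_n -> R[i] :=
  fun x => Complex (iter_pderiv s (fun y => complex.Re (f y)) x)
                   (iter_pderiv s (fun y => complex.Im (f y)) x).

Definition test_cvg0 (R : realType) (n : nat) (phi : nat -> 'rV[R]_n -> R[i])
  : Prop :=
  (forall j, test_fun (phi j)) /\
  (exists K : set 'rV[R]_n, compact K /\ forall j, support_fun (phi j) `<=` K) /\
  (forall (s : seq 'I_n) (e : R), 0 < e ->
     \forall j \near \oo, forall x, `|iter_pderivC s (phi j) x| < (e%:C)%C).

Definition bounded_op (R : realType) (X : completeNormedModType R[i])
  (T : X -> X) : Prop := linear T /\ continuous T.

Definition opnorm_cvg0 (R : realType) (X : completeNormedModType R[i])
  (T : nat -> X -> X) : Prop :=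
  forall e : R, 0 < e ->
    \forall j \near \oo, forall x : X, `|T j x| <= (e%:C)%C * `|x|.

Definition dom_hyp (R : realType) (n : nat) (X : completeNormedModType R[i])
  (A : ('rV[R]_n -> R[i]) -> X -> X) : set X :=
  \bigcup_(phi in [set f | test_fun f]) range (A phi).

Definition hyperoperator (R : realType) (n : nat) (X : completeNormedModType R[i])
  (A : ('rV[R]_n -> R[i]) -> X -> X) : Prop :=
  (forall phi, test_fun phi -> bounded_op (A phi)) /\
  (forall phi psi, test_fun phi -> test_fun psi ->
      A (fun x => phi x + psi x) = (fun v => A phi v + A psi v)) /\
  (forall (c : R[i]) phi, test_fun phi ->
      A (fun x => c * phi x) = (fun v => c *: A phi v)) /\
  (forall phi psi, test_fun phi -> test_fun psi ->
      A (fun x => phi x * psi x) = (A phi \o A psi)) /\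
  (forall phi : nat -> 'rV[R]_n -> R[i], test_cvg0 phi ->
      opnorm_cvg0 (fun j => A (phi j))) /\
  dense (dom_hyp A) /\
  (forall v : X, (forall phi, test_fun phi -> A phi v = 0) -> v = 0).

Definition exhausting (R : realType) (n : nat) (chi : nat -> 'rV[R]_n -> R[i])
  : Prop :=
  (forall N, test_fun (chi N)) /\
  (forall N x, 0 <= chi N x <= 1) /\
  (forall N x, chi N x <= chi N.+1 x) /\
  (forall x (e : R), 0 < e -> \forall N \near \oo, `|chi N x - 1| < (e%:C)%C) /\
  (forall N, compact [set x | chi N x = 1]) /\
  (forall N, [set x | chi N x = 1] `<=` interior [set x | chi N.+1 x = 1]) /\
  (\bigcup_N [set x | chi N x = 1] = setT).

(* Main.v *)
Require Import Defs.
From HB Require Import structures.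
From mathcomp Require Import all_boot all_order all_algebra.
From mathcomp Require Import all_classical all_reals all_analysis.
From mathcomp Require Import complex.
Import Order.TTheory GRing.Theory Num.Theory.
Import numFieldNormedType.Exports.
Local Open Scope classical_set_scope.
Local Open Scope ring_scope.

Theorem lemma3p1 (R : realType) (n : nat) (X : completeNormedModType R[i])
  (A : ('rV[R]_n -> R[i]) -> X -> X) (chi : nat -> 'rV[R]_n -> R[i]) :
  hyperoperator A -> exhausting chi ->
  \bigcup_N range (A (chi N)) = dom_hyp A.
Proof.
move=> [_ [_ [_ [Hmul _]]]] [Htf [_ [_ [_ [_ [Hint Hcov]]]]]].
set K := fun N => [set x | chi N x = 1].
have KS : forall N, K N `<=` K N.+1.
  by move=> N x /(Hint N) /interior_subset.
have Kmono : forall i j, (i <= j)%N -> K i `<=` K j.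
  move=> i j /subnK <-; elim: (j - i)%N => [//|k IH].
  by rewrite addSn => x /IH /KS.
apply/seteqP; split.
  move=> y [N _ [x _ <-]]; exists (chi N) => //; exact: Htf.
move=> y [phi tphi [x _ <-]].
have cphi : compact (support_fun phi) by case: tphi => _ [].
move: cphi; rewrite compact_cover => /(_ nat setT (fun i => interior (K i))).
case.
- by move=> i _; exact: open_interior.
- move=> z _; have : (\bigcup_N K N) z by rewrite Hcov.
  by case=> N _ /(Hint N) Hz; exists N.+1.
move=> D' _ Hsub.
set M := (\max_(i <- finmap.enum_fset D') i)%N.
have phiE : phi = (fun x => chi M x * phi x).
  apply/funext => z.
  have [Hz|Hz] := eqVneq (phi z) 0; first by rewrite Hz mulr0.
  have : support_fun phi z by apply: subset_closure; exact: Hz.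
  move=> /Hsub [i /= iD /interior_subset Kiz].
  have : K M z.
    apply: (Kmono i) => //; rewrite /M.
    exact: leq_bigmax_seq.
  by move=> ->; rewrite mul1r.
exists M => //; exists (A phi x) => //.
by rewrite {2}phiE Hmul //; exact: Htf.
Qed.
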